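(* Fix a sensor index $k$, integers $N\ge1$, $B_k\ge1$, $\Delta^{\max}\ge2$, probabilities $p_{k,1},\dots,p_{k,N}\in[0,1]$, $\lambda_k\in[0,1]$, and any $\mu\ge0$. Let $\mathcal{S}_k=\{0,\dots,N\}\times\{0,\dots,B_k\}\times\{1,\dots,\Delta^{\max}\}$, $\mathcal{A}_k=\{0,1\}$, $c_k(s,a)=r\min\{(1-a\mathbf{1}\{b\ge1\})\Delta+1,\Delta^{\max}\}$ for $s=(r,b,\Delta)$, and let $\Pr(s'\mid s,a)$ be the transition probabilities defined as follows for $s'=(r',b',\Delta')$: $r'$ is distributed as $\sum_{n=1}^N X_n$ with independent $X_n\sim$ Bernoulli$(p_{k,n})$, independently of everything else; $b'=\min\{b+e-a\mathbf{1}\{b\ge1\},B_k\}$ with $e\sim$ Bernoulli$(\lambda_k)$ independent; $\Delta'=\min\{(1-a\mathbf{1}\{b\ge1\})\Delta+1,\Delta^{\max}\}$. Fix $s_{\mathrm{ref}}\in\mathcal{S}_k$, set $V^{(0)}\equiv0$, $h^{(0)}\equiv0$, and for $i\ge0$ let $V^{(i+1)}(s)=\min_{a\in\mathcal{A}_k}\big[c_k(s,a)+\mu a+\sum_{s'}\Pr(s'\mid s,a)h^{(i)}(s')\big]$, $h^{(i+1)}(s)=V^{(i+1)}(s)-V^{(i+1)}(s_{\mathrm{ref}})$; let $V=\lim_i V^{(i)}$, $h(s)=V(s)-V(s_{\mathrm{ref}})$, and $Q(s,a)=c_k(s,a)+\mu a+\sum_{s'\in\mathcal{S}_k}\Pr(s'\mid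 s,a)h(s')$. Let $\pi$ be a policy obtained from this procedure, i.e. $\pi(s)\in\arg\min_{a\in\mathcal{A}_k}Q(s,a)$ for all $s$. Then $\pi$ has a threshold structure with respect to the AoI: if the action $1$ is optimal in state $s=(r,b,\Delta)$ (i.e. $\pi(s)=1$), then for every state $\bar s=(r,b,\bar\Delta)\in\mathcal{S}_k$ with $\bar\Delta\ge\Delta$ the action $1$ is also optimal, i.e. $Q(\bar s,1)\le Q(\bar s,0)$.
   Context: The limit $V$ of the relative value iteration is assumed to exist. *)

(* Defs.v *)
From HB Require Import structures.
From mathcomp Require Import all_boot all_order all_algebra.
From mathcomp Require Import all_classical all_reals all_analysis.
Set Implicit Arguments. Unset Strict Implicit. Unset Printing Implicit Defensive.
Import Order.TTheory GRing.Theory Num.Theory.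
Local Open Scope ring_scope.

(* States s = (r, b, d) with r in {0..N}, b in {0..B}, and the AoI
   Delta = val d + 1 in {1..Dmax} (d : 'I_Dmax). *)
Definition state (N B Dmax : nat) := ('I_N.+1 * 'I_B.+1 * 'I_Dmax)%type.

Section MDP.
Variables (R : realType) (N B Dmax : nat).
Variables (p : 'I_N -> R) (lam mu : R).

Definition st_r (s : state N B Dmax) : nat := val s.1.1.
Definition st_b (s : state N B Dmax) : nat := val s.1.2.
Definition st_D (s : state N B Dmax) : nat := (val s.2).+1.

Definition eff (s : state N B Dmax) (a : bool) : bool := a && (0 < st_b s)%N.

Definition next_D (s : state N B Dmax) (a : bool) : nat :=
  minn ((if eff s a then 0 else st_D s) + 1) Dmax.

Definition cost (s : state N B Dmax) (a : bool) : R :=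
  (st_r s)%:R * (next_D s a)%:R.

(* Poisson-binomial pmf: Pr(sum_n X_n = r'), X_n ~ Bernoulli(p n) independent *)
Definition pr_r (r' : nat) : R :=
  \sum_(S : {set 'I_N} | #|S| == r')
     (\prod_(n in S) p n) * (\prod_(n in ~: S) (1 - p n)).

Definition pr_b (s : state N B Dmax) (a : bool) (b' : nat) : R :=
  \sum_(e : bool)
    (if e then lam else 1 - lam) *
    (b' == minn (st_b s + e - eff s a) B)%N%:R.

Definition trans (s : state N B Dmax) (a : bool) (s' : state N B Dmax) : R :=
  pr_r (st_r s') * pr_b s a (st_b s') * (st_D s' == next_D s a)%:R.

Definition bellman (h : state N B Dmax -> R) (s : state N B Dmax) (a : bool) : R :=
  cost s a + mu * (a : nat)%:R + \sum_(s' : state N B Dmax) trans s a s' * h s'.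

Definition Vnext (h : state N B Dmax -> R) (s : state N B Dmax) : R :=
  Num.min (bellman h s false) (bellman h s true).

Variable sref : state N B Dmax.

Fixpoint h_iter (i : nat) : state N B Dmax -> R :=
  match i with
  | 0 => fun _ => 0
  | i'.+1 => fun s => Vnext (h_iter i') s - Vnext (h_iter i') sref
  end.

Definition V_iter (i : nat) : state N B Dmax -> R :=
  match i with
  | 0 => fun _ => 0
  | i'.+1 => Vnext (h_iter i')
  end.

Definition Qfun (V : state N B Dmax -> R) (s : state N B Dmax) (a : bool) : R :=
  bellman (fun s' => V s' - V sref) s a.

End MDP.

(* Main.v *)
Require Import Defs.
From HB Require Import structures.
From mathcomp Require Import all_boot all_order all_algebra.
From mathcomp Require Import all_classical all_reals all_analysis.
From mathcomp Require Import zify ring lra.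
Import Order.TTheory GRing.Theory Num.Theory.
Import numFieldNormedType.Exports.
Local Open Scope classical_set_scope.
Local Open Scope ring_scope.

Definition monoD (R : realType) (N B Dmax : nat) (f : state N B Dmax -> R) :=
  forall s s', st_r s = st_r s' -> st_b s = st_b s' ->
    (st_D s <= st_D s')%N -> f s <= f s'.

Lemma pr_r_ge0 (R : realType) (N : nat) (p : 'I_N -> R)
  (hp : forall n, 0 <= p n <= 1) r : 0 <= pr_r p r.
Proof.
apply: sumr_ge0 => S _; apply: mulr_ge0; apply: prodr_ge0 => n _;
  have /andP[h0 h1] := hp n; by rewrite ?subr_ge0.
Qed.

Lemma pr_b_ge0 (R : realType) (N B Dmax : nat) (lam : R)
  (hlam : 0 <= lam <= 1) (s : state N B Dmax) a b' : 0 <= pr_b lam s a b'.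
Proof.
case/andP: hlam => h0 h1.
apply: sumr_ge0 => e _; apply: mulr_ge0; last by rewrite ler0n.
by case: e; rewrite ?subr_ge0.
Qed.

Lemma sum_collapse (R : realType) (N B Dmax : nat)
  (f : ('I_N.+1 * 'I_B.+1)%type -> R) (h : state N B Dmax -> R) (d0 : 'I_Dmax) :
  \sum_(s' : state N B Dmax) f s'.1 * (st_D s' == d0.+1)%N%:R * h s'
  = \sum_(x : ('I_N.+1 * 'I_B.+1)%type) f x * h (x, d0).
Proof.
transitivity (\sum_(p : ('I_N.+1 * 'I_B.+1 * 'I_Dmax)%type)
   (fun x d => f x * (st_D (x, d) == d0.+1)%N%:R * h (x, d)) p.1 p.2).
  by apply: eq_bigr => -[x d].
rewrite -(pair_bigA _ (fun x d => f x * (st_D (x, d) == d0.+1)%N%:R * h (x, d))).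
apply: eq_bigr => x _.
rewrite (bigD1 d0) //= big1 ?addr0; first by rewrite /st_D /= eqxx mulr1.
move=> d hd; rewrite /st_D /= eqSS.
have -> : (nat_of_ord d == nat_of_ord d0) = false by exact: negbTE hd.
by rewrite mulr0 mul0r.

Qed.

Lemma next_D_bounds (N B Dmax : nat) (hD : (0 < Dmax)%N) (s : state N B Dmax) a :
  (0 < next_D s a)%N && (next_D s a <= Dmax)%N.
Proof.
rewrite /next_D; apply/andP; split; last exact: geq_minr.
by rewrite leq_min addn1 ltn0Sn.
Qed.

Lemma trans_sum (R : realType) (N B Dmax : nat) (hD : (0 < Dmax)%N)
  (p : 'I_N -> R) (lam : R) (h : state N B Dmax -> R) (s : state N B Dmax) a :
  exists d : 'I_Dmax, (d.+1 = next_D s a) /\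
   \sum_(s' : state N B Dmax) trans p lam s a s' * h s'
   = \sum_(x : ('I_N.+1 * 'I_B.+1)%type) (pr_r p (val x.1) * pr_b lam s a (val x.2)) * h (x, d).
Proof.
have /andP[h0 h1] := @next_D_bounds _ _ _ hD s a.
have hlt : ((next_D s a).-1 < Dmax)%N by rewrite prednK.
exists (Ordinal hlt); split; first by rewrite /= prednK.
rewrite -(@sum_collapse _ _ _ _ (fun x => pr_r p (val x.1) * pr_b lam s a (val x.2))).
apply: eq_bigr => s' _; rewrite /trans /= prednK //.
Qed.

Lemma bellman_mono (R : realType) (N B Dmax : nat) (hD : (0 < Dmax)%N)
  (p : 'I_N -> R) (hp : forall n, 0 <= p n <= 1)
  (lam : R) (hlam : 0 <= lam <= 1) (mu : R) (h : state N B Dmax -> R)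
  (hh : @monoD R N B Dmax h) (s s' : state N B Dmax) a :
  st_r s = st_r s' -> st_b s = st_b s' -> (next_D s a <= next_D s' a)%N ->
  bellman p lam mu h s a <= bellman p lam mu h s' a.
Proof.
move=> hr hb hn; rewrite /bellman.
apply: lerD; first apply: lerD => //.
  by rewrite /cost hr ler_wpM2l // ?ler0n // ler_nat.
have [d1 [e1 ->]] := @trans_sum _ _ _ _ hD p lam h s a.
have [d2 [e2 ->]] := @trans_sum _ _ _ _ hD p lam h s' a.
have -> : pr_b lam s a = pr_b lam s' a by rewrite /pr_b /eff hb.
apply: ler_sum => x _; apply: ler_wpM2l.
  by apply: mulr_ge0; [exact: pr_r_ge0 | exact: pr_b_ge0].
by apply: hh => //; rewrite /st_D /= e1 e2.
Qed.

Lemma next_D_mono (N B Dmax : nat) (s s' : state N B Dmax) a :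
  st_b s = st_b s' -> (st_D s <= st_D s')%N -> (next_D s a <= next_D s' a)%N.
Proof.
rewrite /next_D /eff => hb hd; rewrite hb.
case: (a && _) => /=; lia.
Qed.

Lemma Vnext_mono (R : realType) (N B Dmax : nat) (hD : (0 < Dmax)%N)
  (p : 'I_N -> R) (hp : forall n, 0 <= p n <= 1)
  (lam : R) (hlam : 0 <= lam <= 1) (mu : R) (h : state N B Dmax -> R)
  (hh : @monoD R N B Dmax h) : @monoD R N B Dmax (Vnext p lam mu h).
Proof.
move=> s s' hr hb hd; rewrite /Vnext le_min !ge_min.
rewrite !(@bellman_mono _ _ _ _ hD p hp lam hlam mu h hh s s') ?orbT //;
  exact: next_D_mono.
Qed.

Lemma h_iter_mono (R : realType) (N B Dmax : nat) (hD : (0 < Dmax)%N)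
  (p : 'I_N -> R) (hp : forall n, 0 <= p n <= 1)
  (lam : R) (hlam : 0 <= lam <= 1) (mu : R) sref i :
  @monoD R N B Dmax (h_iter p lam mu sref i).
Proof.
elim: i => [|i IH] s s' hr hb hd /=; first by [].
rewrite lerD2r; exact: (@Vnext_mono _ _ _ _ hD _ hp _ hlam mu _ IH s s' hr hb hd).
Qed.

Lemma V_iter_mono (R : realType) (N B Dmax : nat) (hD : (0 < Dmax)%N)
  (p : 'I_N -> R) (hp : forall n, 0 <= p n <= 1)
  (lam : R) (hlam : 0 <= lam <= 1) (mu : R) sref i :
  @monoD R N B Dmax (V_iter p lam mu sref i).
Proof.
case: i => [|i] s s' hr hb hd /=; first by [].
exact: (@Vnext_mono _ _ _ _ hD _ hp _ hlam mu _ (@h_iter_mono _ _ _ _ hD _ hp _ hlam mu sref i) s s' hr hb hd).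
Qed.

Lemma bellman_b0 (R : realType) (N B Dmax : nat)
  (p : 'I_N -> R) (lam mu : R) (h : state N B Dmax -> R) (s : state N B Dmax) :
  st_b s = 0%N -> bellman p lam mu h s true = bellman p lam mu h s false + mu.
Proof.
move=> hb0; rewrite /bellman /cost /trans /next_D /pr_b /eff hb0 /=.
lra.
Qed.

Theorem theorem1 (R : realType) (N B Dmax : nat)
  (hN : (1 <= N)%N) (hB : (1 <= B)%N) (hD : (2 <= Dmax)%N)
  (p : 'I_N -> R) (hp : forall n, 0 <= p n <= 1)
  (lam : R) (hlam : 0 <= lam <= 1) (mu : R) (hmu : 0 <= mu)
  (sref : state N B Dmax)
  (V : state N B Dmax -> R)
  (hV : forall s, (fun i => V_iter p lam mu sref i s) @ \oo --> V s)
  (pi : state N B Dmax -> bool)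
  (hpi : forall s a, Qfun p lam mu sref V s (pi s) <= Qfun p lam mu sref V s a)
  (s : state N B Dmax) (hs : pi s = true)
  (sbar : state N B Dmax)
  (hr : st_r sbar = st_r s) (hb : st_b sbar = st_b s)
  (hDD : (st_D s <= st_D sbar)%N) :
  Qfun p lam mu sref V sbar true <= Qfun p lam mu sref V sbar false.
Proof.
have hD0 : (0 < Dmax)%N by lia.
have hVm : @monoD R N B Dmax V.
  move=> s1 s2 h1 h2 h3; apply: (ler_cvg_to (hV s1) (hV s2)).
  apply: nearW => i.
  exact: (@V_iter_mono _ _ _ _ hD0 _ hp _ hlam mu sref i s1 s2 h1 h2 h3).
have hm : @monoD R N B Dmax (fun s' => V s' - V sref).
  by move=> s1 s2 h1 h2 h3; rewrite lerD2r; exact: hVm.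
have hps := hpi s false; rewrite hs in hps.
rewrite /Qfun in hps *.
case: (posnP (st_b s)) => hb0.
  rewrite bellman_b0 // in hps; rewrite bellman_b0 ?hb //; lra.
have E : bellman p lam mu (fun s' => V s' - V sref) sbar true
       = bellman p lam mu (fun s' => V s' - V sref) s true.
  apply/le_anti/andP; split;
  apply: (@bellman_mono _ _ _ _ hD0 _ hp _ hlam mu _ hm) => //;
  by rewrite /next_D /eff hb hb0.
rewrite E; apply: (le_trans hps).
apply: (@bellman_mono _ _ _ _ hD0 _ hp _ hlam mu _ hm) => //.
exact: next_D_mono.
Qed.
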